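(* Let $T:\mathcal P(\mathbb R^n)\to\mathcal P(\mathbb R^n)$ be $TA=\{y:\langle x,y\rangle\ge 1\ \forall x\in A\}$, let $\mathcal C=\{TK:K\subseteq\mathbb R^n\}$, and let $\mathcal S$ be the set of $K\in\mathcal C\setminus\{\emptyset,\mathbb R^n\}$ whose (unique) point closest to the origin is $e_n$. Identify $\mathbb R^n=\mathbb R^{n-1}\times\mathbb R$. For $K\in\mathcal S$ let $\varphi:\mathbb R^{n-1}\to(0,\infty]$ be $\varphi(x)=\min\{t:(x,t)\in K\}$ (with $\varphi(x)=+\infty$ if no such $t$ exists), and define \[ \tilde T\varphi(y)=\sup_{x\in\mathbb R^{n-1},\ \varphi(x)<\infty}\frac{1-\langle x,y\rangle}{\varphi(x)},\qquad y\in\mathbb R^{n-1}. \] Then $\mathrm{epi}(\varphi)=K$ and $TK=\mathrm{epi}(\tilde T\varphi)$. Moreover, the map $K\mapsto\varphi$ is a bijection between $\mathcal S$ and the class of lower semi-continuous convex functions $\varphi$ on $\mathbb R^{n-1}$ whose minimal value is $\varphi(0)=1$ and which satisfy $-1\le\mathcal L\varphi(y)\le 0$ for all $y\in\mathrm{dom}(\mathcal L\varphi)$.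
   Context: $e_n=(0,\dots,0,1)$. For $\varphi:\mathbb R^{n-1}\to(-\infty,\infty]$, $\mathrm{epi}(\varphi)=\{(x,t)\in\mathbb R^{n-1}\times\mathbb R: t\ge\varphi(x)\}$. $\mathcal L\varphi(y)=\sup_{x}(\langle x,y\rangle-\varphi(x))$ is the Legendre transform and $\mathrm{dom}(\mathcal L\varphi)=\{y:\mathcal L\varphi(y)<\infty\}$. *)

(* Defs.v *)
From HB Require Import structures.
From mathcomp Require Import all_boot all_order all_algebra.
From mathcomp Require Import all_classical all_reals all_analysis.
Set Implicit Arguments. Unset Strict Implicit. Unset Printing Implicit Defensive.
Import Order.TTheory GRing.Theory Num.Theory.
Import numFieldNormedType.Exports.
Local Open Scope classical_set_scope.
Local Open Scope ring_scope.

(* R^n is identified with R^(n-1) x R, i.e. with 'rV[R]_m * R where n = m+1. *)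
Definition pt (R : realType) (m : nat) := ('rV[R]_m * R)%type.

Definition dotv (R : realType) (m : nat) (x y : 'rV[R]_m) : R :=
  \sum_(i < m) x 0 i * y 0 i.

Definition ip (R : realType) (m : nat) (p q : pt R m) : R :=
  dotv p.1 q.1 + p.2 * q.2.

Definition e_n (R : realType) (m : nat) : pt R m := (0, 1).

Definition Tpol (R : realType) (m : nat) (A : set (pt R m)) : set (pt R m) :=
  [set y | forall x, A x -> 1 <= ip x y].

Definition inC (R : realType) (m : nat) (K : set (pt R m)) : Prop :=
  exists L : set (pt R m), K = Tpol L.

Definition inS (R : realType) (m : nat) (K : set (pt R m)) : Prop :=
  [/\ inC K, K <> set0, K <> setT, K (e_n R m) &
      forall p, K p -> p <> e_n R m ->
        Num.sqrt (ip (e_n R m) (e_n R m)) < Num.sqrt (ip p p)].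

Definition phiK (R : realType) (m : nat) (K : set (pt R m)) (x : 'rV[R]_m)
  : \bar R := ereal_inf [set t%:E | t in [set t | K (x, t)]].

Definition epi (R : realType) (m : nat) (phi : 'rV[R]_m -> \bar R)
  : set (pt R m) := [set p | (phi p.1 <= p.2%:E)%E].

Definition Ttilde (R : realType) (m : nat) (phi : 'rV[R]_m -> \bar R)
  (y : 'rV[R]_m) : \bar R :=
  ereal_sup [set ((1 - dotv x y) / fine (phi x))%:E
            | x in [set x | (phi x < +oo)%E]].

Definition legendre (R : realType) (m : nat) (phi : 'rV[R]_m -> \bar R)
  (y : 'rV[R]_m) : \bar R :=
  ereal_sup [set ((dotv x y)%:E - phi x)%E | x in [set: 'rV[R]_m]].

Definition dom_legendre (R : realType) (m : nat) (phi : 'rV[R]_m -> \bar R)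
  : set 'rV[R]_m := [set y | (legendre phi y < +oo)%E].

Definition econvex (R : realType) (m : nat) (phi : 'rV[R]_m -> \bar R) : Prop :=
  forall (x y : 'rV[R]_m) (l : R), 0 < l < 1 ->
    (phi (l *: x + (1 - l) *: y)%R <= l%:E * phi x + (1 - l)%:E * phi y)%E.

Definition inF (R : realType) (m : nat) (phi : 'rV[R]_m -> \bar R) : Prop :=
  [/\ lower_semicontinuous phi, econvex phi,
      phi 0 = 1%E, (forall x, (1 <= phi x)%E) &
      forall y, dom_legendre phi y ->
        ((-1)%:E <= legendre phi y /\ legendre phi y <= 0)%E].

(* Main.v *)
Require Import Defs.
From HB Require Import structures.
From mathcomp Require Import all_boot all_order all_algebra.
From mathcomp Require Import all_classical all_reals all_analysis.
From mathcomp Require Import ring lra.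
Import Order.TTheory GRing.Theory Num.Theory.
Import numFieldNormedType.Exports.
Local Open Scope classical_set_scope.
Local Open Scope ring_scope.
Section Dot.
Variables (R : realType) (m : nat).
Implicit Types (x y z : 'rV[R]_m) (a : R).

Lemma dotvC x y : dotv x y = dotv y x.
Proof. by rewrite /dotv; apply: eq_bigr => i _; rewrite mulrC. Qed.

Lemma dotvDl x y z : dotv (x + y) z = dotv x z + dotv y z.
Proof. by rewrite /dotv -big_split; apply: eq_bigr => i _; rewrite mxE mulrDl. Qed.

Lemma dotvZl a x y : dotv (a *: x) y = a * dotv x y.
Proof. by rewrite /dotv mulr_sumr; apply: eq_bigr => i _; rewrite mxE mulrA. Qed.

Lemma dotvNl x y : dotv (- x) y = - dotv x y.
Proof. by rewrite -scaleN1r dotvZl mulN1r. Qed.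

Lemma dotvBl x y z : dotv (x - y) z = dotv x z - dotv y z.
Proof. by rewrite dotvDl dotvNl. Qed.

Lemma dotv0l y : dotv 0 y = 0.
Proof. by rewrite -(scale0r (0 : 'rV[R]_m)) dotvZl mul0r. Qed.

Lemma dotvDr x y z : dotv z (x + y) = dotv z x + dotv z y.
Proof. by rewrite !(dotvC z) dotvDl. Qed.
Lemma dotvZr a x y : dotv y (a *: x) = a * dotv y x.
Proof. by rewrite !(dotvC y) dotvZl. Qed.
Lemma dotvNr x y : dotv y (- x) = - dotv y x.
Proof. by rewrite !(dotvC y) dotvNl. Qed.
Lemma dotvBr x y z : dotv z (x - y) = dotv z x - dotv z y.
Proof. by rewrite !(dotvC z) dotvBl. Qed.
Lemma dotv0r y : dotv y 0 = 0.
Proof. by rewrite dotvC dotv0l. Qed.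

Lemma dotv_ge0 x : 0 <= dotv x x.
Proof. by rewrite /dotv; apply: sumr_ge0 => i _; rewrite -expr2 sqr_ge0. Qed.

Lemma dotv_coord x i : x 0 i ^+ 2 <= dotv x x.
Proof.
rewrite /dotv (bigD1 i) //= -expr2 lerDl.
by apply: sumr_ge0 => j _; rewrite -expr2 sqr_ge0.
Qed.

Lemma dotv_eq0 x : dotv x x = 0 -> x = 0.
Proof.
move=> h; apply/rowP => i; rewrite mxE.
have := @psumr_eq0P _ _ xpredT (fun i => x 0 i * x 0 i).
move=> /(_ (fun j _ => _)) H.
have : x 0 i * x 0 i = 0 by apply: H => // j; rewrite -expr2 sqr_ge0.
by move/eqP; rewrite mulf_eq0 orbb => /eqP.
Qed.

End Dot.
Arguments dotvC {R m}.
Arguments dotvDl {R m}.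
Arguments dotvZl {R m}.
Arguments dotvNl {R m}.
Arguments dotvBl {R m}.
Arguments dotv0l {R m}.
Arguments dotvDr {R m}.
Arguments dotvZr {R m}.
Arguments dotvNr {R m}.
Arguments dotvBr {R m}.
Arguments dotv0r {R m}.
Arguments dotv_ge0 {R m}.
Arguments dotv_coord {R m}.
Arguments dotv_eq0 {R m}.
Lemma sqrt_lt_inv (R : realType) (a b : R) : Num.sqrt a < Num.sqrt b -> a < b.
Proof.
move=> h; rewrite ltNge; apply/negP => /ler_wsqrtr hb.
by move: (lt_le_trans h hb); rewrite ltxx.
Qed.

Section TP.
Variables (R : realType) (m : nat) (L : set (pt R m)).
Local Notation K := (Tpol L).
Implicit Types (x : 'rV[R]_m) (t : R).

Lemma ipE (w : pt R m) x t : ip w (x, t) = dotv w.1 x + w.2 * t.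
Proof. by []. Qed.

Lemma Tpol_conv x1 t1 x2 t2 l : K (x1,t1) -> K (x2,t2) -> 0 <= l <= 1 ->
  K (l *: x1 + (1 - l) *: x2, l * t1 + (1 - l) * t2).
Proof.
move=> h1 h2 /andP[l0 l1] w Lw; have := h1 w Lw; have := h2 w Lw.
rewrite !ipE dotvDr !dotvZr => a b; nra.
Qed.

Lemma Tpol_ray x t lam : K (x,t) -> 1 <= lam -> K (lam *: x, lam * t).
Proof.
move=> h l1 w Lw; have := h w Lw; rewrite !ipE dotvZr => a; nra.
Qed.

Lemma Tpol_en2 (w : pt R m) : K (e_n R m) -> L w -> 1 <= w.2.
Proof. by move=> h Lw; have := h w Lw; rewrite /e_n ipE dotv0r add0r mulr1. Qed.

Lemma Tpol_up x t t' : K (e_n R m) -> K (x,t) -> t <= t' -> K (x,t').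
Proof.
move=> he h tt w Lw; have := h w Lw; have := Tpol_en2 w he Lw.
rewrite !ipE => a b; nra.
Qed.

Lemma Tpol_ge1 x t : K (e_n R m) ->
  (forall p, K p -> p <> e_n R m ->
        Num.sqrt (ip (e_n R m) (e_n R m)) < Num.sqrt (ip p p)) ->
  K (x,t) -> 1 <= t.
Proof.
move=> he hc hx; rewrite leNgt; apply/negP => t1.
set d := 1 - t; set X := dotv x x; set D := X + d ^+ 2.
have d0 : 0 < d by rewrite /d subr_gt0.
have X0 : 0 <= X by exact: dotv_ge0.
have D0 : 0 < D by rewrite /D; apply: ltr_wpDl => //; rewrite exprn_gt0.
set l := d / (D + d).
have Dd : 0 < D + d by rewrite addr_gt0.
have l0 : 0 < l by rewrite divr_gt0.
have ld : l * (D + d) = d by rewrite /l divfK // gt_eqF.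
have l1 : l <= 1.
  rewrite /l ler_pdivrMr // mul1r lerDr; exact: ltW.
have := @Tpol_conv x t 0 1 l hx he ltac:(by rewrite (ltW l0) l1).
rewrite scaler0 addr0 => Kq.
have neq : (l *: x, l * t + (1 - l) * 1) <> e_n R m.
  rewrite /e_n => -[_]; move=> /eqP; rewrite mulr1 -subr_eq0.
  have -> : l * t + (1 - l) - 1 = - (l * d) by rewrite /d; ring.
  by rewrite oppr_eq0 mulf_eq0 !gt_eqF.
have := hc _ Kq neq; move/sqrt_lt_inv.
rewrite /e_n !ipE /= dotv0r add0r mulr1 dotvZl dotvZr.
have -> : l * t + (1 - l) * 1 = 1 - l * d by rewrite /d; ring.
rewrite -/X => hlt.
have lD : l * D < d.
  have : l * D + l * d = d by rewrite -mulrDr.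
  have : 0 < l * d by rewrite mulr_gt0.
  lra.
have h2 : l * (l * D) < l * d by rewrite ltr_pM2l.
have h3 : 0 < l * d by rewrite mulr_gt0.
move: h2; rewrite /D; nra.
Qed.

End TP.
Arguments Tpol_conv {R m L}.
Arguments Tpol_ray {R m L}.
Arguments Tpol_en2 {R m L}.
Arguments Tpol_up {R m L}.
Arguments Tpol_ge1 {R m L}.
Section PhiK.
Variables (R : realType) (m : nat) (L : set (pt R m)).
Local Notation K := (Tpol L).
Implicit Types (x : 'rV[R]_m) (t : R).

Lemma phiK_Tpol x : K (e_n R m) -> (forall x t, K (x,t) -> 1 <= t) ->
  ((forall t, ~ K (x,t)) /\ phiK K x = +oo%E) \/
  (exists t0, phiK K x = t0%:E /\ 1 <= t0 /\ forall t, K (x,t) <-> t0 <= t).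
Proof.
move=> he h1.
case: (pselect (exists t, K (x,t))) => [[t1 Kt1]|none]; last first.
  left; split; first by move=> t Kt; apply: none; exists t.
  rewrite /phiK (_ : [set _%:E | _ in _] = set0) ?ereal_inf0 //.
  by apply/seteqP; split => // y [t Kt _]; exfalso; apply: none; exists t; exact: Kt.
right.
have ub : (phiK K x <= t1%:E)%E by apply: ereal_inf_lbound; exists t1.
have lb1 : (1%:E <= phiK K x)%E.
  by apply: le_ereal_inf_tmp => _ [t Kt <-]; rewrite lee_fin; exact: h1 Kt.
have lbw : forall w, L w -> (((1 - dotv w.1 x) / w.2)%:E <= phiK K x)%E.
  move=> w Lw; apply: le_ereal_inf_tmp => _ [t Kt <-]; rewrite lee_fin.
  have w2 := Tpol_en2 w he Lw.
  rewrite ler_pdivrMr; last exact: (lt_le_trans ltr01 w2).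
  by have := Kt w Lw; rewrite ipE; lra.
case E: (phiK K x) ub lb1 lbw => [t0| |] //= ub lb1 lbw.
exists t0; split => //; split; first by rewrite -lee_fin.
have Kt0 : K (x, t0).
  move=> w Lw; have := lbw w Lw; rewrite lee_fin.
  have w2 := Tpol_en2 w he Lw.
  rewrite ler_pdivrMr; last exact: (lt_le_trans ltr01 w2).
  rewrite ipE; lra.
move=> t; split => [Kt|tt]; last exact: Tpol_up x t0 t he Kt0 tt.
rewrite -lee_fin -E; apply: ereal_inf_lbound; exists t => //.
Qed.

End PhiK.
Arguments phiK_Tpol {R m L}.
Lemma dotv_bound (R : realType) (m : nat) (w x z : 'rV[R]_m) e :
  (forall i, `|x 0 i - z 0 i| < e) ->
  `|dotv w x - dotv w z| <= (\sum_(i < m) `|w 0 i|) * e.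
Proof.
move=> h; rewrite -dotvBr /dotv mulr_suml.
apply: le_trans (ler_norm_sum _ _ _) _; apply: ler_sum => i _.
rewrite !mxE normrM; apply: ler_wpM2l => //; exact: ltW (h i).
Qed.

Lemma econv_y (R : realType) (c d : R) (a b : \bar R) : 0 < c -> 0 <= d ->
  a = +oo%E -> (0 <= b)%E -> (c%:E * a + d%:E * b)%E = +oo%E.
Proof.
move=> l0 l1 -> b0; rewrite mulry gtr0_sg // mul1e addye //.
by apply: contraTneq (mule_ge0 (l1 : (0 <= d%:E)%E) b0) => ->.
Qed.

Section Fwd.
Variables (R : realType) (m : nat) (L : set (pt R m)).
Local Notation K := (Tpol L).
Hypothesis he : K (e_n R m).
Hypothesis h1 : forall x t, K (x,t) -> 1 <= t.
Local Notation phi := (phiK K).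

Lemma fwd_epi : epi phi = K.
Proof.
apply/seteqP; split => [[x t] | [x t] Kxt]; rewrite /epi /=;
  case: (phiK_Tpol x he h1) => [[none ->]|[t0 [-> [_ iff]]]] //=.
- by rewrite lee_fin => /iff.
- by exfalso; exact: none Kxt.
- by rewrite /epi /= lee_fin; apply/iff.
Qed.

Lemma fwd_pos x : (0 < phi x)%E.
Proof.
case: (phiK_Tpol x he h1) => [[_ ->]|[t0 [-> [t01 _]]]] //.
by rewrite lte_fin (lt_le_trans ltr01).
Qed.

Lemma fwd_phi0 : phi 0 = 1%E.
Proof.
case: (phiK_Tpol 0 he h1) => [[none _]|[t0 [-> [t01 iff]]]].
  by exfalso; exact: none he.
by have := iff 1 => -[/(_ he) ? _]; congr (_%:E); apply/eqP; rewrite eq_le t01 andbT.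
Qed.

Lemma fwd_ge1 x : (1 <= phi x)%E.
Proof.
by case: (phiK_Tpol x he h1) => [[_ ->]|[t0 [-> [t01 _]]]]; rewrite ?leey ?lee_fin.
Qed.

Lemma fwd_T : Tpol K = epi (Ttilde phi).
Proof.
apply/seteqP; split => [[y s] /= hT | [y s] /= hs].
  rewrite /epi /=; apply: ge_ereal_sup => _ [x /= fin <-].
  case: (phiK_Tpol x he h1) fin => [[_ ->]|[t0 [-> [t01 iff]]]] // _.
  have Kt0 : K (x, t0) by apply/iff.
  have := hT _ Kt0; rewrite /ip /= lee_fin ler_pdivrMr ?(lt_le_trans ltr01) //.
  lra.
move=> [x t] Kxt; rewrite /ip /=.
have hsup : forall x0, (phi x0 < +oo)%E ->
    (((1 - dotv x0 y) / fine (phi x0))%:E <= s%:E)%E.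
  move=> x0 fin; apply: le_trans hs; apply: ereal_sup_ubound; exists x0 => //.
have s1 : 1 <= s.
  have := hsup 0; rewrite fwd_phi0 /= dotv0l subr0 divr1 lee_fin; apply.
  exact: ltry.
case: (phiK_Tpol x he h1) hsup => [[none _]|[t0 [E [t01 iff]]]] hsup.
  by exfalso; exact: none Kxt.
have := hsup x; rewrite E /= lee_fin ler_pdivrMr ?(lt_le_trans ltr01) //.
move=> /(_ (ltry _)) h; have := (iff t).1 Kxt; nra.
Qed.

Lemma fwd_lsc : lower_semicontinuous phi.
Proof.
move=> x0 a ha.
have nK : ~ K (x0, a).
  case: (phiK_Tpol x0 he h1) ha => [[none _]|[t0 [-> [_ iff]]]] ha.
    exact: none.
  by move/iff; rewrite -lee_fin; apply/negP; rewrite -ltNge.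
have [w [Lw hw]] : exists w, L w /\ ip w (x0, a) < 1.
  apply: contra_notP nK => hn w Lw; rewrite leNgt; apply/negP => hl.
  by apply: hn; exists w.
set S := \sum_(i < m) `|w.1 0 i|.
have S0 : 0 <= S by apply: sumr_ge0 => i _.
set g := 1 - ip w (x0, a).
have g0 : 0 < g by rewrite /g subr_gt0.
exists (ball x0 (g / (S + 1))).
  by apply: nbhsx_ballx; rewrite divr_gt0 // ltr_wpDl.
move=> x [_ bx].
have nKx : ~ K (x, a).
  move=> Kx; have := Kx w Lw; rewrite ipE.
  have hb : forall i, `|x 0 i - x0 0 i| < g / (S + 1).
    by move=> i; have := bx 0 i; rewrite /ball /= distrC.
  have := @dotv_bound R m w.1 x x0 _ hb; rewrite -/S.
  have : S * (g / (S + 1)) < g.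
    rewrite mulrA ltr_pdivrMr ?ltr_wpDl //; nra.
  move: g0; rewrite /g ipE => _ h2 /ler_normlP [h3 h4].
  lra.
case: (phiK_Tpol x he h1) => [[_ ->]|[t0 [-> [_ iff]]]]; first exact: ltry.
by rewrite lte_fin ltNge; apply/negP => /iff.
Qed.

Lemma fwd_conv : econvex phi.
Proof.
move=> x y l /andP[l0 l1].
have l1' : 0 < 1 - l by rewrite subr_gt0.
have g0 z : (0 <= phi z)%E by apply: le_trans (fwd_ge1 z).
case: (phiK_Tpol x he h1) => [[_ Ex]|[tx [Ex [_ iffx]]]].
  by rewrite econv_y ?leey // ltW.
case: (phiK_Tpol y he h1) => [[_ Ey]|[ty [Ey [_ iffy]]]].
  by rewrite addeC econv_y ?leey // ltW.
have Kc := Tpol_conv x tx y ty l ((iffx tx).2 (lexx _)) ((iffy ty).2 (lexx _))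
  ltac:(by rewrite (ltW l0) (ltW l1)).
rewrite Ex Ey -!EFinM -EFinD.
case: (phiK_Tpol (l *: x + (1 - l) *: y) he h1) => [[none _]|[t0 [-> [_ iff]]]].
  by exfalso; exact: none Kc.
by rewrite lee_fin; apply/iff.
Qed.

Lemma fwd_leg y : dom_legendre phi y ->
  ((-1)%:E <= legendre phi y /\ legendre phi y <= 0)%E.
Proof.
rewrite /dom_legendre /= => hy.
have lo : ((-1)%:E <= legendre phi y)%E.
  apply: le_trans (ereal_sup_ubound _); last by exists 0.
  by rewrite fwd_phi0 dotv0l /= add0e.
split => //.
case E: (legendre phi y) lo hy => [M| |] //= lo _.
rewrite lee_fin leNgt; apply/negP => M0.
have : ((0:R)%:E <= legendre phi y)%E by rewrite E lee_fin ltW.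
move=> _.
suff : forall x t0, phi x = t0%:E -> dotv x y <= t0.
  move=> hx; move: M0; rewrite ltNge; move/negP; apply.
  rewrite -lee_fin -E; apply: ge_ereal_sup => _ [x _ <-].
  case: (phiK_Tpol x he h1) => [[_ ->]|[t0 [Ex _]]]; first by rewrite addeNy leNye.
  by rewrite Ex -EFinB lee_fin subr_le0; apply: hx.
move=> x t0 Ex.
case: (phiK_Tpol x he h1) Ex => [[_ ->]|[t1 [-> [_ iff]]]] // [<-].
rewrite leNgt; apply/negP => dt.
set d := dotv x y - t1.
have d0 : 0 < d by rewrite /d subr_gt0.
set lam := 1 + (`|M| + 1) / d.
have lam1 : 1 <= lam by rewrite /lam lerDl divr_ge0 ?(ltW d0) // addr_ge0.
have lamd : M < lam * d.
  rewrite /lam mulrDl mul1r divfK ?gt_eqF //.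
  have := ler_norm M; lra.
have Kl := Tpol_ray x t1 lam ((iff t1).2 (lexx _)) lam1.
have : ((dotv (lam *: x) y)%:E - phi (lam *: x) <= legendre phi y)%E.
  by apply: ereal_sup_ubound; exists (lam *: x).
case: (phiK_Tpol (lam *: x) he h1) => [[none _]|[t2 [-> [_ iff2]]]].
  by exfalso; exact: none Kl.
rewrite E -EFinB lee_fin dotvZl.
have := (iff2 _).1 Kl; rewrite /d in lamd; nra.
Qed.

End Fwd.
Section Topo.
Variables (R : realType) (m : nat).
Implicit Types (x y z : 'rV[R]_m).

Lemma nbhs_coord y (V : set 'rV[R]_m) : nbhs y V ->
  exists2 e : R, 0 < e & forall x, (forall i, `|x 0 i - y 0 i| < e) -> V x.
Proof.
move=> /nbhs_ballP [e e0 hV]; exists e => // x hx; apply: hV; split => // i j.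
by rewrite (ord1 i) /ball /= distrC; exact: hx j.
Qed.

Lemma coord_nbhs y (e : R) : 0 < e ->
  nbhs y [set x | forall i, `|x 0 i - y 0 i| < e].
Proof.
move=> e0; apply: (@filterS _ _ _ (ball y e)); last exact: nbhsx_ballx.
move=> x [_ bx] i.
by have := bx 0 i; rewrite /ball /= distrC.
Qed.

Lemma Nlow x x' y (e : R) : (forall i, `|x' 0 i - x 0 i| < e) ->
  dotv (x - y) (x - y) - 2 * ((\sum_(i < m) `|(x - y) 0 i|) * e)
    <= dotv (x' - y) (x' - y).
Proof.
move=> h.
have -> : x' - y = (x - y) + (x' - x) by apply/rowP => i; rewrite !mxE; ring.
have hb := @dotv_bound R m (x - y) x' x e h.
rewrite -dotvBr in hb.
have := dotv_ge0 (x' - x).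
move: (x - y) (x' - x) hb => a b hb hbb.
rewrite !dotvDl !dotvDr (dotvC b a).
move: hb => /ler_normlP [h1 h2]; lra.
Qed.

Lemma lsc_addN (f : 'rV[R]_m -> \bar R) y (c : R) : 0 <= c ->
  lower_semicontinuous f ->
  lower_semicontinuous (fun x => (f x + (c * dotv (x - y) (x - y))%:E)%E).
Proof.
move=> c0 lf x a ha.
set Nx := dotv (x - y) (x - y).
have [b hb1 hb2] : exists2 b : R, (b%:E < f x)%E & a < b + c * Nx.
  move: ha; rewrite -/Nx; case E: (f x) => [r| |] //= ha.
  - exists ((r + (a - c * Nx)) / 2); move: ha; rewrite -EFinD !lte_fin; lra.
  - by exists (a - c * Nx + 1); [exact: ltry | lra].
set d := b + c * Nx - a.
have d0 : 0 < d by rewrite /d subr_gt0.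
set S := \sum_(i < m) `|(x - y) 0 i|.
have S0 : 0 <= S by apply: sumr_ge0.
have [V nV hV] := lf x b hb1.
set e := d / (2 * c * S + 1).
have den0 : 0 < 2 * c * S + 1 by apply: ltr_wpDl => //; rewrite !mulr_ge0.
have e0 : 0 < e by rewrite divr_gt0.
have cSe : c * (2 * (S * e)) <= d.
  have -> : c * (2 * (S * e)) = d * ((2 * c * S) / (2 * c * S + 1)).
    by rewrite /e; field; rewrite gt_eqF.
  by rewrite ger_pMr // ler_pdivrMr // mul1r lerDl.
exists (V `&` [set x' | forall i, `|x' 0 i - x 0 i| < e]).
  by apply: filterI => //; exact: coord_nbhs.
move=> x' [Vx' bx']; have := hV _ Vx'; have := @Nlow x x' y e bx'; rewrite -/S -/Nx.
move=> hN; have hcN := ler_wpM2l c0 hN.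
case: (f x') => [r| |] //=; last by move=> _; rewrite addye //; exact: ltry.
rewrite -EFinD !lte_fin => hr.
move: hcN; rewrite mulrBr => hcN.
move: cSe; rewrite /d; lra.
Qed.

End Topo.
Arguments nbhs_coord {R m}.
Arguments coord_nbhs {R m}.
Arguments Nlow {R m}.
Arguments lsc_addN {R m}.
Section Attain.
Variables (R : realType) (m : nat).

Lemma lsc_attain (F : 'rV[R]_m -> \bar R) (B : set 'rV[R]_m) x1 :
  compact B -> B x1 -> lower_semicontinuous F ->
  (forall x, ((0:R)%:E <= F x)%E) -> (F x1 < +oo)%E ->
  exists2 x0, B x0 & forall x, B x -> (F x0 <= F x)%E.
Proof.
move=> cpt Bx1 lsc F0 Fx1.
set mu := ereal_inf (F @` B).
have mu_ub : (mu <= F x1)%E by apply: ereal_inf_lbound; exists x1.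
have mu_lb : ((0:R)%:E <= mu)%E by apply: le_ereal_inf_tmp => _ [x _ <-].
case E: mu mu_ub mu_lb => [m0| |] mu_ub mu_lb //; last first.
  by move: (le_lt_trans mu_ub Fx1).
set G := filter_from [set e : R | 0 < e]
  (fun e => [set x | B x /\ (F x < (m0 + e)%:E)%E]).
have GF : Filter G.
  apply: filter_from_filter.
    by exists 1; rewrite /= ltr01.
  move=> i j i0 j0; exists (Order.min i j); first by rewrite /= lt_min i0 j0.
  move=> x [Bx Fx].
  have hi : ((m0 + Order.min i j)%:E <= (m0 + i)%:E)%E.
    by rewrite lee_fin lerD2l ge_min lexx.
  have hj : ((m0 + Order.min i j)%:E <= (m0 + j)%:E)%E.
    by rewrite lee_fin lerD2l ge_min lexx orbT.
  by split; split => //; [exact: lt_le_trans Fx hi | exact: lt_le_trans Fx hj].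
have GP : ProperFilter G.
  apply: filter_from_proper => e e0.
  have : (mu < (m0 + e)%:E)%E by rewrite E lte_fin ltrDl.
  by move/ereal_inf_lt => [_ [x Bx <-] Fx]; exists x.
have GB : G B by exists 1; [rewrite /= ltr01 | move=> x []].
have [x0 [Bx0 cl]] := cpt G GP GB.
exists x0 => // x Bx.
suff h : (F x0 <= m0%:E)%E.
  by apply: le_trans h _; rewrite -E; apply: ereal_inf_lbound; exists x.
rewrite leNgt; apply/negP => hlt.
have [a ha1 ha2] : exists2 a, m0 < a & (a%:E < F x0)%E.
  case E0: (F x0) hlt => [f| |] //= hlt.
    by exists ((m0 + f) / 2); move: hlt; rewrite !lte_fin; lra.
  by exists (m0 + 1); [lra | exact: ltry].
have [V nV hV] := lsc x0 a ha2.
have GA : G [set x | B x /\ (F x < (m0 + (a - m0))%:E)%E].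
  by exists (a - m0) => //=; rewrite subr_gt0.
have [z [[_ Fz] Vz]] := cl _ _ GA nV.
have := hV _ Vz; move: Fz; rewrite addrC subrK => h1 h2.
by move: (lt_trans h1 h2); rewrite ltxx.
Qed.

End Attain.
Arguments lsc_attain {R m}.
Lemma lim_small (R : realType) (A B D : R) : 0 <= D ->
  (forall t, 0 < t -> t < 1 -> A <= B + t * D) -> A <= B.
Proof.
move=> D0 h; rewrite leNgt; apply/negP => hBA.
set u := A - B.
have u0 : 0 < u by rewrite /u subr_gt0.
have uD : 0 < 2 * (u + D) by rewrite mulr_gt0 // ltr_wpDr.
set t := u / (2 * (u + D)).
have t0 : 0 < t by rewrite divr_gt0.
have tu : t * (2 * (u + D)) = u by rewrite /t divfK // gt_eqF.
have t1 : t < 1 by rewrite /t ltr_pdivrMr // mul1r; lra.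
have := h t t0 t1; have := mulr_gt0 t0 u0; have := mulr_ge0 (ltW t0) D0.
move: tu; rewrite /u; nra.
Qed.

Lemma sq_ge_abs (R : realType) (a e : R) : 0 <= e -> e <= `|a| -> e ^+ 2 <= a ^+ 2.
Proof. by move=> e0 ea; rewrite -(real_normK (num_real a)) !expr2; apply: ler_pM. Qed.

Lemma abs_le_sq (R : realType) (a : R) : `|a| <= a ^+ 2 + 1.
Proof. rewrite -(real_normK (num_real a)); have := sqr_ge0 (`|a| - 1); have := normr_ge0 a; nra. Qed.

Lemma dotvNN (R : realType) (m : nat) (a : 'rV[R]_m) : dotv (- a) (- a) = dotv a a.
Proof. by rewrite dotvNl dotvNr opprK. Qed.

Arguments lim_small {R}.
Arguments sq_ge_abs {R}.
Arguments abs_le_sq {R}.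
Arguments dotvNN {R m}.

Section Minorant.
Variables (R : realType) (m : nat) (phi : 'rV[R]_m -> \bar R).
Hypothesis lsc : lower_semicontinuous phi.
Hypothesis cvx : econvex phi.
Hypothesis phi0 : phi 0 = 1%E.
Hypothesis phi1 : forall x, (1 <= phi x)%E.

Lemma minorant y s : (s%:E < phi y)%E -> exists z c0,
  (forall x, ((dotv x z - c0)%:E <= phi x)%E) /\ s < dotv y z - c0.
Proof.
move=> hs.
have [s' hs1 hs2] : exists2 s', s < s' & (s'%:E < phi y)%E.
  case E: (phi y) hs => [r| |] //= hs.
    by exists ((s + r) / 2); move: hs; rewrite !lte_fin; lra.
  by exists (s + 1); [lra | exact: ltry].
have [V nV hV] := lsc y s' hs2.
have [e e0 he] := nbhs_coord _ _ nV.
set N := fun x => dotv (x - y) (x - y).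
have N0 x : 0 <= N x by exact: dotv_ge0.
set c := (`|s'| + 1) / (e ^+ 2).
have e20 : 0 < e ^+ 2 by rewrite exprn_gt0.
have c0 : 0 <= c by rewrite divr_ge0 // ?ltW // addr_ge0.
have ce : c * e ^+ 2 = `|s'| + 1 by rewrite /c divfK // gt_eqF.
set F := fun x => (phi x + (c * N x)%:E)%E.
have phir x : phi x = +oo%E \/ exists r, phi x = r%:E /\ 1 <= r.
  have := phi1 x; case: (phi x) => [r h| _|//]; last by left.
  by right; exists r; split => //; rewrite -lee_fin.
have Flow : forall x, (s'%:E <= F x)%E.
  move=> x; case: (pselect (forall i, `|x 0 i - y 0 i| < e)) => [hx | hx].
    have := hV _ (he _ hx); rewrite /F.
    case: (phir x) => [->|[r [-> r1]]] h; first by rewrite addye ?leey.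
    rewrite -EFinD lee_fin; move: h; rewrite lte_fin; have := N0 x.
    move=> hN h; have := mulr_ge0 c0 hN; lra.
  have [i hi] : exists i, e <= `|x 0 i - y 0 i|.
    apply: contra_notP hx => hn i; rewrite ltNge; apply/negP => hi.
    by apply: hn; exists i.
  have hNi : e ^+ 2 <= N x.
    apply: le_trans (sq_ge_abs _ _ (ltW e0) hi) _.
    by have := dotv_coord (x - y) i; rewrite !mxE.
  have hc : `|s'| + 1 <= c * N x by rewrite -ce; apply: ler_wpM2l.
  rewrite /F; case: (phir x) => [->|[r [-> r1]]]; first by rewrite addye ?leey.
  rewrite -EFinD lee_fin; have := ler_norm s'; lra.
set M := N 0 + 1.
set B := [set v : 'rV[R]_m | forall i, `[y 0 i - M, y 0 i + M]%classic (v ord0 i)].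
have cB : compact B.
  by apply: (@rV_compact _ _ (fun i => `[y 0 i - M, y 0 i + M]%classic)) => i; exact: segment_compact.
have B0 : B 0.
  move=> i; rewrite /= in_itv /= mxE.
  have h1 : (0 - y) 0 i ^+ 2 <= N 0 := dotv_coord (0 - y) i.
  move: h1; rewrite !mxE sub0r sqrrN => h1.
  have := abs_le_sq (y 0 i); rewrite /M; move: (ler_norm (y 0 i)) (ler_normr (y 0 i)).
  have := ler_norm (- y 0 i); rewrite normrN.
  move=> h2 h3 h4 h5; apply/andP; split; lra.
have Flsc : lower_semicontinuous F by exact: lsc_addN.
have F0 x : ((0:R)%:E <= F x)%E.
  rewrite /F; case: (phir x) => [->|[r [-> r1]]]; first by rewrite addye ?leey.
  rewrite -EFinD lee_fin; have := mulr_ge0 c0 (N0 x); lra.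
have F0fin : F 0 = (1 + c * N 0)%:E by rewrite /F phi0 EFinD.
have [x0 Bx0 hx0] := lsc_attain F B 0 cB B0 Flsc F0 ltac:(by rewrite F0fin ltry).
have Fmin : forall x, (F x0 <= F x)%E.
  move=> x; case: (pselect (B x)) => [Bx|nBx]; first exact: hx0.
  apply: le_trans (hx0 _ B0) _.
  have [i hi] : exists i, ~ `[y 0 i - M, y 0 i + M]%classic (x ord0 i).
    by apply: contra_notP nBx => hn i; apply: contra_notP hn => h; exists i.
  have hM : M <= `|x 0 i - y 0 i|.
    move: hi; rewrite /= in_itv /= => /negP; rewrite negb_and -!ltNge.
    move=> /orP[h|h]; [rewrite distrC|]; apply/ltW.
      by rewrite ltr_normr; apply/orP; left; lra.
    by rewrite ltr_normr; apply/orP; left; lra.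
  have M1 : 1 <= M by rewrite /M lerDr.
  have hN : N 0 <= N x.
    have := dotv_coord (x - y) i; rewrite !mxE => h.
    have := sq_ge_abs _ _ (le_trans ler01 M1) hM.
    have : M <= M ^+ 2 by rewrite expr2 ler_peMr // (le_trans ler01 M1).
    rewrite /M /N; lra.
  rewrite F0fin /F; case: (phir x) => [->|[r [-> r1]]]; first by rewrite addye ?leey.
  by rewrite -EFinD lee_fin; have := ler_wpM2l c0 hN; lra.
have [f0 Ef0] : exists f0, phi x0 = f0%:E.
  case: (phir x0) => [E|[r [-> _]]]; last by exists r.
  by have := Fmin 0; rewrite F0fin /F E addye.
have sub : forall x, ((f0 + 2 * c * dotv (x - x0) (y - x0))%:E <= phi x)%E.
  move=> x; case: (phir x) => [->|[g [Eg _]]]; first exact: leey.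
  rewrite Eg lee_fin.
  apply: (lim_small _ _ (c * dotv (x - x0) (x - x0))).
    by rewrite mulr_ge0 // dotv_ge0.
  move=> t t0 t1.
  set xt := t *: x + (1 - t) *: x0.
  have hc := cvx x x0 t ltac:(by rewrite t0 t1).
  rewrite Eg Ef0 -!EFinM -EFinD in hc.
  have hF := Fmin xt; rewrite /F Ef0 in hF.
  case: (phir xt) hc hF => [->|[h [-> _]]] //; rewrite ?lee_fin -?EFinD ?lee_fin.
  move=> hc hF.
  have eN : N xt = N x0 + 2 * t * dotv (x0 - y) (x - x0)
      + t ^+ 2 * dotv (x - x0) (x - x0).
    rewrite /N /xt.
    have -> : t *: x + (1 - t) *: x0 - y = (x0 - y) + t *: (x - x0).
      by apply/rowP => i; rewrite !mxE; ring.
    move: (x0 - y) (x - x0) => a b.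
    rewrite !dotvDl !dotvDr !dotvZl !dotvZr (dotvC b a); ring.
  rewrite eN in hF.
  have eP : dotv (x0 - y) (x - x0) = - dotv (x - x0) (y - x0).
    by rewrite dotvC -dotvNr opprB.
  rewrite eP in hF.
  move: hF hc; rewrite -/(N x0).
  move: (dotv (x - x0) (y - x0)) (dotv (x - x0) (x - x0)) (N x0) => P Q Nx0 hF hc.
  have key : t * (f0 + 2 * c * P - (g + t * (c * Q))) <= 0 by nra.
  by move: key; rewrite pmulr_rle0 // subr_le0.
exists ((2 * c) *: (y - x0)), (2 * c * dotv x0 (y - x0) - f0); split.
  move=> x; have := sub x.
  suff -> : dotv x ((2 * c) *: (y - x0)) - (2 * c * dotv x0 (y - x0) - f0)
    = f0 + 2 * c * dotv (x - x0) (y - x0) by [].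
  by rewrite dotvZr dotvBl; ring.
have := Flow x0; rewrite /F Ef0 -EFinD lee_fin.
have eN : N x0 = dotv (y - x0) (y - x0) by rewrite /N -opprB dotvNN.
have ey : dotv y (y - x0) = dotv (y - x0) (y - x0) + dotv x0 (y - x0).
  by rewrite dotvBl; ring.
rewrite eN dotvZr ey; have := dotv_ge0 (y - x0).
move: (dotv (y - x0) (y - x0)) (dotv x0 (y - x0)) => Q P hQ h.
have := mulr_ge0 c0 hQ; nra.
Qed.

End Minorant.
Arguments minorant {R m}.

Lemma ipC (R : realType) (m : nat) (p q : pt R m) : ip p q = ip q p.
Proof. by rewrite /ip dotvC mulrC. Qed.

Section Bwd.
Variables (R : realType) (m : nat) (phi : 'rV[R]_m -> \bar R).
Hypothesis hF : inF phi.

Let phir x : phi x = +oo%E \/ exists r, phi x = r%:E /\ 1 <= r.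
Proof.
have [_ _ _ phi1 _] := hF.
have := phi1 x; case: (phi x) => [r h| _|//]; last by left.
by right; exists r; split => //; rewrite -lee_fin.
Qed.

Lemma bwd_phiK : phiK (epi phi) = phi.
Proof.
apply/funext => x; rewrite /phiK /epi /=.
case: (phir x) => [E|[r [E r1]]]; rewrite E.
  rewrite (_ : [set _%:E | _ in _] = set0) ?ereal_inf0 //.
  by apply/seteqP; split => // y [t /=]; rewrite leNgt ltey.
apply/eqP; rewrite eq_le; apply/andP; split.
  by apply: ereal_inf_lbound; exists r => //=.
by apply: le_ereal_inf_tmp => _ [t /= h <-].
Qed.

Lemma bwd_sep y s : ~ epi phi (y, s) ->
  exists w, Tpol (epi phi) w /\ ip w (y, s) < 1.
Proof.
have [lsc cvx phi0 phi1 leg] := hF.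
rewrite /epi /= => /negP; rewrite -ltNge => hs.
have [z [c0 [hmin hzs]]] := minorant phi lsc cvx phi0 phi1 y s hs.
have Lc : (legendre phi z <= c0%:E)%E.
  apply: ge_ereal_sup => _ [x _ <-].
  case: (phir x) => [->|[r [Er _]]]; first by rewrite addeNy leNye.
  by rewrite Er -EFinB lee_fin; have := hmin x; rewrite Er lee_fin; lra.
have [lo up] := leg z (le_lt_trans Lc (ltry _)).
case E: (legendre phi z) lo up Lc => [cc| |] // lo up Lc.
rewrite lee_fin in Lc; rewrite lee_fin in up.
have hsup : forall x r, phi x = r%:E -> dotv x z - r <= cc.
  move=> x r Ex; rewrite -lee_fin -E EFinB -Ex.
  by apply: ereal_sup_ubound; exists x.
set a := - cc.
set den := a + dotv y z - s.
have den0 : 0 < den by rewrite /den /a; lra.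
set k := `|s| / den.
have k0 : 0 <= k by rewrite divr_ge0 // ltW.
have kden : k * den = `|s| by rewrite /k divfK // gt_eqF.
set D := 1 + k * a.
have a0 : 0 <= a by rewrite /a oppr_ge0.
have D0 : 0 < D by rewrite /D; have := mulr_ge0 k0 a0; lra.
exists ((- k / D) *: z, (k + 1) / D); split.
  move=> [x t] /= hxt.
  rewrite ipE /= dotvZr.
  have -> : - k / D * dotv x z + t * ((k + 1) / D) = (t * (k + 1) - k * dotv x z) / D.
    by field; rewrite gt_eqF.
  rewrite ler_pdivlMr // mul1r.
  case: (phir x) hxt => [->|[r [Er r1]]]; first by rewrite leNgt ltey.
  rewrite Er lee_fin => rt.
  have := hsup x r Er; rewrite /D /a => h.
  have : k * (t - dotv x z) >= k * (- cc) by rewrite ler_wpM2l //; lra.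
  nra.
rewrite ipE /= dotvZl dotvC.
have -> : - k / D * dotv y z + (k + 1) / D * s = (s * (k + 1) - k * dotv y z) / D.
  by field; rewrite gt_eqF.
rewrite ltr_pdivrMr // mul1r.
move: kden; rewrite /den /D /a => kden.
have := ler_norm s; nra.
Qed.

Lemma bwd_inS : inS (epi phi).
Proof.
have [lsc cvx phi0 phi1 leg] := hF.
have ee : epi phi (e_n R m) by rewrite /epi /= phi0.
split => //.
- exists (Tpol (epi phi)); apply/seteqP; split.
    by move=> p hp w hw; rewrite ipC; exact: hw.
  move=> [y s] hp; apply: contra_notP (fun x => x) => hn.
  have [w [hw hws]] := bwd_sep y s hn.
  by have := hp w hw; rewrite leNgt hws.
- by move=> h; move: ee; rewrite h.
- move=> h; have : epi phi (0, 0) by rewrite h.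
  by rewrite /epi /= phi0 lee_fin ler10.
- move=> [x t] hxt hne.
  have hs : Num.sqrt (ip (e_n R m) (e_n R m)) = 1.
    by rewrite /e_n ipE /= dotv0r add0r mulr1 sqrtr1.
  rewrite hs.
  have t1 : 1 <= t by have := le_trans (phi1 x) hxt; rewrite lee_fin.
  have hgt : 1 < ip (x, t) (x, t).
    rewrite ipE /=.
    have X0 := dotv_ge0 x.
    case: (eqVneq x 0) => [x0|xn0].
      have tn1 : t != 1 by apply/eqP => t1'; apply: hne; rewrite x0 t1'.
      have tg : 1 < t by rewrite lt_neqAle eq_sym tn1 t1.
      nra.
    have : dotv x x != 0 by apply/eqP => /dotv_eq0 /eqP; rewrite (negbTE xn0).
    move=> hx; have Xp : 0 < dotv x x by rewrite lt_neqAle eq_sym hx X0.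
    nra.
  by rewrite -sqrtr1 ltr_sqrt // (lt_trans ltr01).
Qed.

End Bwd.

Theorem proposition5p3 (R : realType) (m : nat) :
  (forall K : set (pt R m), inS K ->
     [/\ (forall x, (0 < phiK K x)%E),
         epi (phiK K) = K &
         Tpol K = epi (Ttilde (phiK K))]) /\
  set_bij (@inS R m) (@inF R m) (@phiK R m).
Proof.
have fwd : forall K : set (pt R m), inS K -> exists L, [/\ K = Tpol L,
   Tpol L (e_n R m) & forall x t, Tpol L (x, t) -> 1 <= t].
  move=> K [[L ->] _ _ he hc]; exists L; split => //.
  by move=> x t; apply: Tpol_ge1.
split.
  move=> K /fwd [L [-> he h1]]; split.
  - exact: fwd_pos.
  - exact: fwd_epi.
  - exact: fwd_T.
split.
- move=> K /fwd [L [-> he h1]]; split.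
  + exact: fwd_lsc.
  + exact: fwd_conv.
  + exact: fwd_phi0.
  + exact: fwd_ge1.
  + exact: fwd_leg.
- move=> K1 K2; rewrite !inE => /fwd [L1 [-> he1 h11]] /fwd [L2 [-> he2 h12]] E.
  by rewrite -(@fwd_epi _ _ _ he1 h11) -(@fwd_epi _ _ _ he2 h12) E.
- move=> phi hphi; exists (epi phi); first exact: bwd_inS.
  exact: bwd_phiK.
Qed.
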